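(* The augmentation homomorphism $\varepsilon_1:\Lambda(\mathbb{Q}\mathrm{Tree})\to L_0$ has no splitting preserving the units; that is, there is no Lie algebra homomorphism $s:L_0\to\Lambda(\mathbb{Q}\mathrm{Tree})$ with $\varepsilon_1\circ s=\mathrm{id}_{L_0}$ and $s\left(x\frac{d}{dx}\right)=1\in\mathrm{Tree}((1))$.
   Context: $\mathrm{Tree}((m))$, $m\ge1$, is the set of planar rooted trees with one root at the bottom and $m$ leaves at the top labeled $1,\dots,m$ from left to right, every internal vertex having at least two inputs; equivalently, meaningful ways of inserting parentheses into the word $12\cdots m$ (e.g. $\mathrm{Tree}((3))=\{((12)3),(1(23)),(123)\}$). Composition $S\circ_iT$ grafts the root of $T$ to the $i$-th leaf of $S$, making $\mathrm{Tree}$ a nonsymmetric operad of sets with unit the trivial tree $1\in\mathrm{Tree}((1))$. $\Lambda(\mathbb{Q}\mathrm{Tree})=\bigoplus_{m\ge1}\mathbb{Q}\mathrm{Tree}((m))$ with Lie bracket $[c,d]=\sum_{t=1}^{j}d\circ_tc-\sum_{s=1}^{k}c\circ_sd$ for $c\in\mathrm{Tree}((k))$, $d\in\mathrm{Tree}((j))$, extended bilinearly. $L_0=x\mathbb{Q}[x]\frac{d}{dx}$ is the Lie algebra of polynomial vector fields on the line vanishing at $0$. The augmentation $\varepsilon_1$ is the (surjective) Lie algebra homomorphism sending every tree in $\mathrm{Tree}((m))$ to $x^m\frac{d}{dx}$. *)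

(* Defs.v *)
From HB Require Import structures.
From mathcomp Require Import all_boot all_order all_algebra.
From mathcomp Require Import finmap.
From mathcomp.multinomials Require Import monalg.

Set Implicit Arguments.
Unset Strict Implicit.
Unset Printing Implicit Defensive.

Import GRing.Theory.
Local Open Scope ring_scope.

(* Planar rooted trees.  [Leaf] is a leaf (input); [Node ts] is an     *)
(* internal vertex whose inputs are the subtrees [ts], listed from     *)
(* left to right.  The root is at the bottom.                          *)
Inductive ptree : Type := Leaf | Node of seq ptree.

Fixpoint ptree_enc (t : ptree) : GenTree.tree unit :=
  match t with
  | Leaf => GenTree.Node 0 [::]
  | Node ts => GenTree.Node 1 (map ptree_enc ts)
  end.

Fixpoint ptree_dec (g : GenTree.tree unit) : ptree :=
  match g with
  | GenTree.Leaf _ => Leaf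
  | GenTree.Node 0 _ => Leaf
  | GenTree.Node _ gs => Node (map ptree_dec gs)
  end.

Lemma ptree_encK : cancel ptree_enc ptree_dec.
Proof.
rewrite /cancel; fix IH 1; case=> [|ts] //=; congr Node.
elim: ts => [|t ts IHts] //=; by rewrite IH IHts.
Qed.

HB.instance Definition _ := Countable.copy ptree (can_type ptree_encK).

Fixpoint leaves (t : ptree) : nat :=
  match t with
  | Leaf => 1
  | Node ts => sumn (map leaves ts)
  end.

Fixpoint valid_tree (t : ptree) : bool :=
  match t with
  | Leaf => true
  | Node ts => (2 <= size ts)%N && all valid_tree ts
  end.

Definition Tree (m : nat) : pred ptree := fun t => valid_tree t && (leaves t == m).

(* [graft0 S i T] grafts the root of T onto the leaf of S with
   0-based index i (leaves numbered from left to right). *)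
Fixpoint graft0 (S : ptree) (i : nat) (T : ptree) : ptree :=
  match S with
  | Leaf => if i == 0%N then T else Leaf
  | Node ss =>
      Node ((fix gl (ss : seq ptree) (i : nat) : seq ptree :=
               match ss with
               | [::] => [::]
               | u :: us => if (i < leaves u)%N then graft0 u i T :: us
                            else u :: gl us (i - leaves u)%N
               end) ss i)
  end.

(* Operadic composition S o_i T, with 1-based leaf index i (1 <= i <= leaves S). *)
Definition ocomp (S : ptree) (i : nat) (T : ptree) : ptree := graft0 S i.-1 T.

Definition unit_tree : ptree := Leaf.

Definition Lam := {malg rat[ptree]}.

Definition in_Lam (a : Lam) : Prop := forall t, t \in msupp a -> valid_tree t.

Definition tree_bracket (c d : ptree) : Lam :=
  \sum_(1 <= t < (leaves d).+1) << ocomp d t c >>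
  - \sum_(1 <= s < (leaves c).+1) << ocomp c s d >>.

Definition lam_bracket (a b : Lam) : Lam :=
  \sum_(c <- msupp a) \sum_(d <- msupp b) (a@_c * b@_d) *: tree_bracket c d.

(* L_0 = x Q[x] d/dx: the vector field f(x) d/dx is represented by the
   polynomial f, with f(0) = 0. *)
Definition in_L0 (f : {poly rat}) : Prop := f`_0 = 0.

Definition vf_bracket (f g : {poly rat}) : {poly rat} := f * g^`() - g * f^`().

Definition eps1 (a : Lam) : {poly rat} :=
  \sum_(t <- msupp a) a@_t *: 'X^(leaves t).

(* Main.v *)
Require Import Defs.
From HB Require Import structures.
From mathcomp Require Import all_boot all_order all_algebra.
From mathcomp Require Import finmap.
From mathcomp.multinomials Require Import monalg.
From mathcomp Require Import zify ring lra.
From Stdlib Require List.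
Import GRing.Theory Num.Theory.
Local Open Scope ring_scope.


Lemma sum_msupp_ext (V : zmodType) (a : Lam) (S : seq ptree) (F : ptree -> rat -> V) :
  uniq S -> {subset msupp a <= S} -> (forall c, F c 0 = 0) ->
  \sum_(c <- msupp a) F c a@_c = \sum_(c <- S) F c a@_c.
Proof.
move=> uS sub F0.
rewrite [RHS](bigID (fun c => c \in msupp a)) /=.
rewrite [X in _ + X]big1 ?addr0; last by move=> c /mcoeff_outdom ->.
rewrite -[RHS]big_filter; apply: perm_big.
apply: uniq_perm; first exact: fset_uniq.
  exact: filter_uniq.
by move=> x; rewrite mem_filter; case: (boolP (x \in msupp a)) => // /sub ->.
Qed.

Definition lb (S T : seq ptree) (a b : Lam) : Lam :=
  \sum_(c <- S) \sum_(d <- T) (a@_c * b@_d) *: tree_bracket c d.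

Lemma lam_bracket_lb S T a b : uniq S -> uniq T ->
  {subset msupp a <= S} -> {subset msupp b <= T} ->
  lam_bracket a b = lb S T a b.
Proof.
move=> uS uT sa sb; rewrite /lam_bracket /lb.
rewrite (@sum_msupp_ext _ a S (fun c x => \sum_(d <- msupp b) (x * b@_d) *: tree_bracket c d)) //; last first.
  by move=> c; apply: big1 => d _; rewrite mul0r scale0r.
apply: eq_bigr => c _.
by rewrite (@sum_msupp_ext _ b T (fun d y => (a@_c * y) *: tree_bracket c d)) // => d; rewrite mulr0 scale0r.
Qed.

Lemma supp_comb (r : rat) (a a' : Lam) :
  {subset msupp (r *: a + a') <= undup (msupp a ++ msupp a')}.
Proof.
move=> x; rewrite mem_undup mem_cat -!mcoeff_neq0 mcoeffD mcoeffZ.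
by case: (boolP (a@_x != 0)) => //= /negPn/eqP ->; rewrite mulr0 add0r.
Qed.

Lemma sub_undupl (s1 s2 : seq ptree) : {subset s1 <= undup (s1 ++ s2)}.
Proof. by move=> x; rewrite mem_undup mem_cat => ->. Qed.
Lemma sub_undupr (s1 s2 : seq ptree) : {subset s2 <= undup (s1 ++ s2)}.
Proof. by move=> x; rewrite mem_undup mem_cat => ->; rewrite orbT. Qed.

Lemma lam_bracket_combl r a a' b :
  lam_bracket (r *: a + a') b = r *: lam_bracket a b + lam_bracket a' b.
Proof.
set S := undup (msupp a ++ msupp a').
have uS : uniq S by apply: undup_uniq.
rewrite !(@lam_bracket_lb S (msupp b)) ?fset_uniq //;
  [|exact: sub_undupr|exact: sub_undupl|exact: supp_comb].
rewrite /lb scaler_sumr -big_split; apply: eq_bigr => c _.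
rewrite scaler_sumr -big_split; apply: eq_bigr => d _.
by rewrite mcoeffD mcoeffZ scalerA mulrDl scalerDl -mulrA.
Qed.

Lemma lam_bracket_combr r a b b' :
  lam_bracket a (r *: b + b') = r *: lam_bracket a b + lam_bracket a b'.
Proof.
set S := undup (msupp b ++ msupp b').
have uS : uniq S by apply: undup_uniq.
rewrite !(@lam_bracket_lb (msupp a) S) ?fset_uniq //;
  [|exact: sub_undupr|exact: sub_undupl|exact: supp_comb].
rewrite /lb scaler_sumr -big_split; apply: eq_bigr => c _.
rewrite scaler_sumr -big_split; apply: eq_bigr => d _.
by rewrite mcoeffD mcoeffZ scalerA mulrDr scalerDl mulrCA.
Qed.

Lemma lam_bracketDl a a' b : lam_bracket (a + a') b = lam_bracket a b + lam_bracket a' b.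
Proof. by rewrite -[a in LHS]scale1r lam_bracket_combl scale1r. Qed.
Lemma lam_bracketDr a b b' : lam_bracket a (b + b') = lam_bracket a b + lam_bracket a b'.
Proof. by rewrite -[b in LHS]scale1r lam_bracket_combr scale1r. Qed.
Lemma msupp0' : {subset msupp (0 : Lam) <= [::]}.
Proof. by move=> x; rewrite -mcoeff_neq0 mcoeff0 eqxx. Qed.
Lemma lam_bracket0l b : lam_bracket 0 b = 0.
Proof. by rewrite (@lam_bracket_lb [::] (msupp b)) ?fset_uniq // ?/lb ?big_nil //; apply: msupp0'. Qed.
Lemma lam_bracket0r a : lam_bracket a 0 = 0.
Proof.
rewrite (@lam_bracket_lb (msupp a) [::]) ?fset_uniq //; last exact: msupp0'.
by rewrite /lb; apply: big1 => c _; rewrite big_nil.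
Qed.
Lemma lam_bracketZl r a b : lam_bracket (r *: a) b = r *: lam_bracket a b.
Proof. by have := lam_bracket_combl r a 0 b; rewrite addr0 lam_bracket0l addr0. Qed.
Lemma lam_bracketZr r a b : lam_bracket a (r *: b) = r *: lam_bracket a b.
Proof. by have := lam_bracket_combr r a b 0; rewrite addr0 lam_bracket0r addr0. Qed.

Lemma msupp_U1 (t : ptree) : {subset msupp (<< t >> : Lam) <= [:: t]}.
Proof. move=> x; rewrite inE -mcoeff_neq0 mcoeffU; by have [_|_] := eqVneq x t. Qed.

Lemma lam_bracketUU c d : lam_bracket << c >> << d >> = tree_bracket c d.
Proof.
rewrite (@lam_bracket_lb [:: c] [:: d]) //; try exact: msupp_U1.
by rewrite /lb !big_seq1 !mcoeffUU mulr1 scale1r.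
Qed.

Lemma U_scale (x : rat) (k : ptree) : << x *g k >> = x *: (<< k >> : Lam).
Proof. by apply/malgP => k'; rewrite mcoeffZ !mcoeffU mulr_natr. Qed.

Lemma lam_expand (a : Lam) (S : seq ptree) : uniq S -> {subset msupp a <= S} ->
  a = \sum_(c <- S) a@_c *: << c >>.
Proof.
move=> uS sub; rewrite {1}(monalgE a).
under eq_bigr => k _ do rewrite U_scale.
apply: (@sum_msupp_ext _ a S (fun c x => x *: (<< c >> : Lam))) => // c.
by rewrite scale0r.
Qed.
Definition ptree_ind' (P : ptree -> Prop) (HL : P Leaf)
  (HN : forall ts, (forall t, Stdlib.Lists.List.In t ts -> P t) -> P (Node ts)) : forall t, P t :=
  fix F t := match t with
  | Leaf => HL
  | Node ts => HN ts ((fix G (ts : seq ptree) : forall t, Stdlib.Lists.List.In t ts -> P t :=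
       match ts with
       | [::] => fun t (h : Stdlib.Lists.List.In t [::]) => match h with end
       | u :: us => fun t h => match h with
                              | or_introl e => eq_ind u P (F u) t e
                              | or_intror h' => G us t h'
                              end
       end) ts)
  end.

Lemma graft0_leaf t i : graft0 t i Leaf = t.
Proof.
elim/ptree_ind': t i => [|ts IH] i /=; first by case: (i == 0%N).
congr Node; elim: ts i IH => [|u us IHus] i IH //=.
case: ifP => _.
  by rewrite IH //; left.
by rewrite IHus // => t ht; apply: IH; right.
Qed.

Lemma tree_bracket_leaf d : tree_bracket Leaf d = (leaves d)%:R *: << d >> - << d >>.
Proof.
rewrite /tree_bracket /ocomp /=.
under eq_bigr => t _ do rewrite graft0_leaf.
by rewrite !sumr_const_nat subn1 /= big_nat1 scaler_nat.
Qed.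

Lemma leaf_term (x : rat) d u : (x *: ((leaves d)%:R *: (<< d >> : Lam) - << d >>))@_u
   = if d == u then x * ((leaves d)%:R - 1) else 0.
Proof.
rewrite mcoeffZ mcoeffB mcoeffZ mcoeffU.
by case: eqP => _; rewrite ?mulr1 ?mulr0n ?mulr0 ?subr0.
Qed.

Lemma leaf_bracket_coef (a : Lam) u :
  (lam_bracket << Leaf >> a)@_u = a@_u * ((leaves u)%:R - 1).
Proof.
rewrite (@lam_bracket_lb [:: Leaf] (msupp a)) ?fset_uniq //; last exact: msupp_U1.
rewrite /lb big_seq1 mcoeffUU raddf_sum /=.
under eq_bigr => d _ do rewrite mul1r tree_bracket_leaf leaf_term.
have [uin|uout] := boolP (u \in msupp a).
  rewrite (bigD1_seq u) ?fset_uniq //= eqxx big1 ?addr0 // => d /negbTE ->.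
  by [].
rewrite (mcoeff_outdom uout) mul0r big1_seq // => d /andP [_ din].
by case: eqP din uout => // -> ->.
Qed.

Lemma supp_eigen (a : Lam) (n : nat) :
  lam_bracket << Leaf >> a = (n%:R - 1) *: a ->
  forall u, u \in msupp a -> leaves u = n.
Proof.
move=> H u uin; move/(congr1 (mcoeff u)): H.
rewrite leaf_bracket_coef mcoeffZ mulrC => /eqP.
rewrite -subr_eq0 -mulrBl mulf_eq0 mcoeff_eq0 uin orbF opprB addrA subrK subr_eq0.
by rewrite eqr_nat => /eqP.
Qed.

Definition c0 := Node [:: Leaf; Leaf].
Definition t1 := Node [:: c0; Leaf].
Definition t2 := Node [:: Leaf; c0].
Definition t3 := Node [:: Leaf; Leaf; Leaf].

Lemma leaves_pos t : valid_tree t -> (0 < leaves t)%N.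
Proof.
elim/ptree_ind': t => [|ts IH] //=.
case: ts IH => [|a r] IH //= /andP [_ /andP [va _]].
have := IH a (or_introl erefl) va; lia.
Qed.

Arguments leaves_pos {t}.

Lemma sumn_ge r : all valid_tree r -> (size r <= sumn (map leaves r))%N.
Proof.
elim: r => [|a r IH] //= /andP [va vr].
have := leaves_pos va; have := IH vr; lia.
Qed.

Arguments sumn_ge {r}.

Lemma leaves1 t : valid_tree t -> leaves t = 1%N -> t = Leaf.
Proof.
case: t => [|ts] //= /andP [s2 vs] h.
have := sumn_ge vs; lia.
Qed.

Arguments leaves1 {t}.

Lemma leaves2 t : valid_tree t -> leaves t = 2%N -> t = c0.
Proof.
case: t => [|[|a [|b r]]] //= /and3P [va vb vr] h.
have := sumn_ge vr; have := leaves_pos va; have := leaves_pos vb => pb pa sr.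
have la : leaves a = 1%N by lia.
have lb : leaves b = 1%N by lia.
have r0 : r = [::] by case: r sr h {vr} => //= x r; lia.
by rewrite r0 (leaves1 va la) (leaves1 vb lb).
Qed.

Arguments leaves2 {t}.

Lemma leaves3 t : valid_tree t -> leaves t = 3%N -> t \in [:: t1; t2; t3].
Proof.
case: t => [|[|a [|b r]]] //= /and3P [va vb vr] h.
have := sumn_ge vr; have := leaves_pos va; have := leaves_pos vb => pb pa sr.
case: r sr h vr => [|c r] /= sr h vr.
  have [[la lb]|[la lb]] : (leaves a = 1 /\ leaves b = 2 \/ leaves a = 2 /\ leaves b = 1)%N by lia.
    by rewrite (leaves1 va la) (leaves2 vb lb) !inE eqxx orbT.
  by rewrite (leaves2 va la) (leaves1 vb lb) !inE eqxx.
move: vr => /andP [vc vr]; have := leaves_pos vc => pc.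
have la : leaves a = 1%N by lia.
have lb : leaves b = 1%N by lia.
have lc : leaves c = 1%N by lia.
have r0 : r = [::] by case: r sr h {vr} => //= x r; lia.
by rewrite r0 (leaves1 va la) (leaves1 vb lb) (leaves1 vc lc) !inE eqxx !orbT.
Qed.


Definition fl := seq (int * ptree).
Definition lam_of (A : fl) : Lam := \sum_(p <- A) (p.1)%:~R *: << p.2 >>.

Definition scl (k : int) (A : fl) : fl := [seq (k * p.1, p.2) | p <- A].

Definition tbl (c d : ptree) : fl :=
  [seq (1%Z, ocomp d t c) | t <- iota 1 (leaves d)] ++
  [seq ((-1)%Z, ocomp c s d) | s <- iota 1 (leaves c)].

Definition brl (A B : fl) : fl :=
  flatten [seq flatten [seq scl (p.1 * q.1) (tbl p.2 q.2) | q <- B] | p <- A].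

Fixpoint coefl (u : ptree) (A : fl) : int :=
  match A with
  | [::] => 0
  | p :: A' => (if p.2 == u then p.1 else 0) + coefl u A'
  end.

Lemma lam_of_cat A B : lam_of (A ++ B) = lam_of A + lam_of B.
Proof. by rewrite /lam_of big_cat. Qed.

Lemma lam_of_flatten (L : seq fl) : lam_of (flatten L) = \sum_(A <- L) lam_of A.
Proof.
elim: L => [|A L IH]; first by rewrite /lam_of !big_nil.
by rewrite /= lam_of_cat IH big_cons.
Qed.

Lemma lam_of_scl k A : lam_of (scl k A) = k%:~R *: lam_of A.
Proof.
rewrite /lam_of /scl big_map scaler_sumr; apply: eq_bigr => p _.
by rewrite scalerA intrM.
Qed.

Lemma lam_of_tbl c d : lam_of (tbl c d) = tree_bracket c d.
Proof.
rewrite /tbl lam_of_cat /lam_of !big_map /tree_bracket /index_iota !subSS !subn0.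
congr (_ + _); first by apply: eq_bigr => t _; rewrite scale1r.
rewrite -sumrN; apply: eq_bigr => t _; by rewrite scaleN1r.
Qed.

Lemma lam_ofU t : << t >> = lam_of [:: (1%Z, t)].
Proof. by rewrite /lam_of big_seq1 /= scale1r. Qed.

Lemma lam_bracket_sumL A b :
  lam_bracket (lam_of A) b = \sum_(p <- A) p.1%:~R *: lam_bracket << p.2 >> b.
Proof.
elim: A => [|p A IH]; first by rewrite /lam_of !big_nil lam_bracket0l.
by rewrite /lam_of !big_cons lam_bracketDl lam_bracketZl -IH.
Qed.

Lemma lam_bracket_sumR a B :
  lam_bracket a (lam_of B) = \sum_(q <- B) q.1%:~R *: lam_bracket a << q.2 >>.
Proof.
elim: B => [|q B IH]; first by rewrite /lam_of !big_nil lam_bracket0r.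
by rewrite /lam_of !big_cons lam_bracketDr lam_bracketZr -IH.
Qed.

Lemma brl_ok A B : lam_of (brl A B) = lam_bracket (lam_of A) (lam_of B).
Proof.
rewrite /brl lam_of_flatten big_map lam_bracket_sumL; apply: eq_bigr => p _.
rewrite lam_of_flatten big_map lam_bracket_sumR scaler_sumr; apply: eq_bigr => q _.
by rewrite lam_of_scl lam_bracketUU lam_of_tbl scalerA intrM.
Qed.

Lemma mcoeff_lam_of A u : (lam_of A)@_u = (coefl u A)%:~R.
Proof.
elim: A => [|p A IH]; first by rewrite /lam_of big_nil mcoeff0.
rewrite /lam_of big_cons mcoeffD mcoeffZ mcoeffU -/(lam_of A) IH /= intrD.
by case: eqP => _; rewrite ?mulr1 ?mulr0.
Qed.


Lemma lin3r a (x y z : rat) A B C :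
  lam_bracket a (x *: A + y *: B + z *: C) = x *: lam_bracket a A + y *: lam_bracket a B + z *: lam_bracket a C.
Proof. by rewrite !lam_bracketDr !lam_bracketZr. Qed.

Lemma lin3l a (x y z : rat) A B C :
  lam_bracket (x *: A + y *: B + z *: C) a = x *: lam_bracket A a + y *: lam_bracket B a + z *: lam_bracket C a.
Proof. by rewrite !lam_bracketDl !lam_bracketZl. Qed.

Lemma coef_lin (x y z : rat) (P1 P2 P3 Q11 Q12 Q13 Q21 Q22 Q23 Q31 Q32 Q33 : Lam) u :
  (x *: P1 + y *: P2 + z *: P3
   - 6 *: (x *: (x *: Q11 + y *: Q21 + z *: Q31) + y *: (x *: Q12 + y *: Q22 + z *: Q32)
           + z *: (x *: Q13 + y *: Q23 + z *: Q33)))@_u =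
  x * P1@_u + y * P2@_u + z * P3@_u
  - 6 * (x * x * Q11@_u + x * y * Q21@_u + x * z * Q31@_u
       + y * x * Q12@_u + y * y * Q22@_u + y * z * Q32@_u
       + z * x * Q13@_u + z * y * Q23@_u + z * z * Q33@_u).
Proof. rewrite !(mcoeffB, mcoeffD, mcoeffZ). ring. Qed.

Lemma expand_coef (D A B C : fl) (x y z : rat) u :
  (lam_bracket (lam_of D) (lam_bracket (lam_of D) (lam_bracket (lam_of D) (x *: lam_of A + y *: lam_of B + z *: lam_of C)))
   - 6 *: lam_bracket (x *: lam_of A + y *: lam_of B + z *: lam_of C) (lam_bracket (lam_of D) (x *: lam_of A + y *: lam_of B + z *: lam_of C)))@_u =
  x * (coefl u (brl D (brl D (brl D A))))%:~R
  + y * (coefl u (brl D (brl D (brl D B))))%:~R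
  + z * (coefl u (brl D (brl D (brl D C))))%:~R
  - 6 * (x * x * (coefl u (brl A (brl D A)))%:~R
       + x * y * (coefl u (brl B (brl D A)))%:~R
       + x * z * (coefl u (brl C (brl D A)))%:~R
       + y * x * (coefl u (brl A (brl D B)))%:~R
       + y * y * (coefl u (brl B (brl D B)))%:~R
       + y * z * (coefl u (brl C (brl D B)))%:~R
       + z * x * (coefl u (brl A (brl D C)))%:~R
       + z * y * (coefl u (brl B (brl D C)))%:~R
       + z * z * (coefl u (brl C (brl D C)))%:~R).
Proof.
rewrite !lin3r !lin3l coef_lin.
rewrite -!mcoeff_lam_of !brl_ok.
reflexivity.
Qed.

Definition u1 := Node [:: Node [:: c0; Node [:: Leaf; c0]]; Leaf].
Definition u2 := Node [:: Leaf; Node [:: Node [:: c0; Leaf]; c0]].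
Definition u3 := Node [:: c0; c0; c0].
Definition C0 : fl := [:: (1%Z, c0)].
Definition T1 : fl := [:: (1%Z, t1)].
Definition T2 : fl := [:: (1%Z, t2)].
Definition T3 : fl := [:: (1%Z, t3)].

Ltac compute_coefl H :=
  repeat match type of H with context[coefl ?u ?A] =>
    let v := eval vm_compute in (coefl u A) in
    rewrite (_ : coefl u A = v) in H; [|vm_compute; reflexivity] end.

Lemma final_contra (al be ga : rat) : al + be + ga = 1 ->
  lam_bracket (lam_of C0) (lam_bracket (lam_of C0) (lam_bracket (lam_of C0)
     (al *: lam_of T1 + be *: lam_of T2 + ga *: lam_of T3)))
  = 6 *: lam_bracket (al *: lam_of T1 + be *: lam_of T2 + ga *: lam_of T3)
       (lam_bracket (lam_of C0) (al *: lam_of T1 + be *: lam_of T2 + ga *: lam_of T3)) -> False.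
Proof.
move=> h E.
have Z : forall u, (lam_bracket (lam_of C0) (lam_bracket (lam_of C0) (lam_bracket (lam_of C0)
     (al *: lam_of T1 + be *: lam_of T2 + ga *: lam_of T3)))
  - 6 *: lam_bracket (al *: lam_of T1 + be *: lam_of T2 + ga *: lam_of T3)
       (lam_bracket (lam_of C0) (al *: lam_of T1 + be *: lam_of T2 + ga *: lam_of T3)))@_u = 0.
  by move=> u; rewrite E subrr mcoeff0.
have E1 := etrans (esym (Z u1)) (expand_coef C0 T1 T2 T3 al be ga u1).
have E2 := etrans (esym (Z u2)) (expand_coef C0 T1 T2 T3 al be ga u2).
have E3 := etrans (esym (Z u3)) (expand_coef C0 T1 T2 T3 al be ga u3).
clear Z E.
compute_coefl E1. compute_coefl E2. compute_coefl E3.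
lra.
Qed.


Lemma vfXX m n : vf_bracket 'X^(m.+1) 'X^(n.+1) = (n%:R - m%:R) *: ('X^((m + n).+1) : {poly rat}).
Proof.
rewrite /vf_bracket !derivXn /= !mulrnAr -!exprD.
have -> : (m.+1 + n = (m + n).+1)%N by lia.
have -> : (n.+1 + m = (m + n).+1)%N by lia.
by rewrite -!scaler_nat -scalerBl; congr (_ *: _); rewrite !mulrS; ring.
Qed.

Arguments supp_eigen {a n}.

Lemma L0X n : in_L0 ('X^(n.+1) : {poly rat}).
Proof. by rewrite /in_L0 coefXn. Qed.

Theorem theorem7p1 :
  ~ exists s : {poly rat} -> Lam,
      [/\ (* s maps L_0 into Lambda(Q Tree) *)
          (forall f, in_L0 f -> in_Lam (s f)),
          (* s is Q-linear on L_0 *)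
          (forall (r : rat) f g, in_L0 f -> in_L0 g -> s (r *: f + g) = r *: s f + s g),
          (* s preserves brackets *)
          (forall f g, in_L0 f -> in_L0 g -> s (vf_bracket f g) = lam_bracket (s f) (s g)),
          (* s is a section of eps_1 *)
          (forall f, in_L0 f -> eps1 (s f) = f)
        & (* s(x d/dx) = 1 *)
          s 'X = << unit_tree >>].
Proof.
case=> s [Hsupp Hlin Hbr Heps HX].
have L00 : in_L0 (0 : {poly rat}) by rewrite /in_L0 coef0.
have s0 : s 0 = 0.
  have := Hlin 1 0 0 L00 L00; rewrite !scale1r !addr0.
  by move=> /(congr1 (fun x => x - s 0)); rewrite subrr addrK => <-.
have sZ : forall r f, in_L0 f -> s (r *: f) = r *: s f.
  by move=> r f hf; have := Hlin r f 0 hf L00; rewrite !addr0 s0 addr0.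
have K : forall m n, (n%:R - m%:R) *: s 'X^((m + n).+1)
                     = lam_bracket (s 'X^(m.+1)) (s 'X^(n.+1)).
  move=> m n; rewrite -Hbr; try exact: L0X. by rewrite vfXX sZ //; exact: L0X.
set c := s 'X^2.
set T := s 'X^3.
have e2 : lam_bracket << Leaf >> c = (2%:R - 1) *: c.
  have := K 0 1; rewrite expr1 HX => <-.
  by congr (_ *: _); lra.
have sc : {subset msupp c <= [:: c0]}.
  move=> u uin; by rewrite inE (leaves2 (Hsupp _ (L0X 1) u uin) (supp_eigen e2 u uin)).
have ec : c = c@_c0 *: << c0 >> by rewrite {1}(@lam_expand c [:: c0] erefl sc) big_seq1.
have cc0 : c@_c0 = 1.
  have := Heps _ (L0X 1); rewrite -/c /eps1.
  rewrite (@sum_msupp_ext _ c [:: c0] (fun t x => x *: 'X^(leaves t))) //; last first.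
    by move=> t; rewrite scale0r.
  rewrite big_seq1 => /(congr1 (fun p : {poly rat} => p`_2)).
  by rewrite coefZ !coefXn /= mulr1.
rewrite cc0 scale1r in ec.
have e3 : lam_bracket << Leaf >> T = (3%:R - 1) *: T.
  have := K 0 2; rewrite expr1 HX => <-.
  by congr (_ *: _); lra.
have uS : uniq [:: t1; t2; t3] by [].
have sT : {subset msupp T <= [:: t1; t2; t3]}.
  move=> u uin; exact: (@leaves3 u (Hsupp _ (L0X 2) u uin) (supp_eigen e3 u uin)).
have eT : T = T@_t1 *: << t1 >> + T@_t2 *: << t2 >> + T@_t3 *: << t3 >>.
  rewrite {1}(@lam_expand T _ uS sT).
  rewrite 2!big_cons.
  rewrite big_seq1.
  rewrite addrA.
  by [].
have hsum : T@_t1 + T@_t2 + T@_t3 = 1.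
  have := Heps _ (L0X 2); rewrite -/T /eps1.
  rewrite (@sum_msupp_ext _ T [:: t1; t2; t3] (fun t x => x *: 'X^(leaves t))) //; last first.
    by move=> t; rewrite scale0r.
  rewrite !big_cons big_nil => /(congr1 (fun p : {poly rat} => p`_3)).
  by rewrite !coefD !coefZ !coefXn /= coef0 !mulr1 addr0 addrA.
have s4 : s 'X^4 = lam_bracket c T.
  by rewrite -(K 1 2) (_ : (2%:R - 1%:R : rat) = 1) ?scale1r //; lra.
have E : lam_bracket c (lam_bracket c (lam_bracket c T))
         = 6 *: lam_bracket T (lam_bracket c T).
  rewrite -s4 -(K 1 3) lam_bracketZr -(K 1 4) -(K 2 3) !scalerA.
  by congr (_ *: _); lra.
set al := T@_t1 in eT hsum. set be := T@_t2 in eT hsum. set ga := T@_t3 in eT hsum.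
apply: (@final_contra al be ga hsum).
rewrite /T1 /T2 /T3 /C0 -!lam_ofU -ec -eT.
exact: E.
Qed.
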